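(* Let $\mathbb{X},\mathbb{Y}$ be real Banach spaces of dimension greater than $1$ and let $T\in\mathbb{L}(\mathbb{X},\mathbb{Y})$ be nonzero. Let $0<\delta,\delta_1,\delta_2<\|T\|$. Then: (i) $M_T(\delta)$ is nonempty. (ii) If $\delta_1<\delta_2$ then $M_T(\delta_1)\subseteq M_T(\delta_2)$. Moreover, if $T$ is not a scalar multiple of an isometry, then there exist $0<\delta_1<\delta_2<\|T\|$ such that $M_T(\delta_1)\subsetneq M_T(\delta_2)$. (iii) $M_T=\bigcap_{0<\delta<\|T\|}M_T(\delta)$. (iv) If $\mathbb{X}$ is finite-dimensional, then $T$ is injective if and only if $M_T(\delta)=S_{\mathbb{X}}$ for some $0<\delta<\|T\|$. This equivalence is not necessarily true if $\mathbb{X}$ is infinite-dimensional: there exist an infinite-dimensional Banach space $\mathbb{X}$ and an injective nonzero $T\in\mathbb{L}(\mathbb{X},\mathbb{X})$ such that $M_T(\delta)\neq S_{\mathbb{X}}$ for every $0<\delta<\|T\|$.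
   Context: $\mathbb{L}(\mathbb{X},\mathbb{Y})$ is the space of bounded linear operators with the operator norm; $S_{\mathbb{X}}$ is the unit sphere of $\mathbb{X}$. For $T\in\mathbb{L}(\mathbb{X},\mathbb{Y})$, the norm attainment set is $M_T=\{x\in S_{\mathbb{X}}:\|Tx\|=\|T\|\}$. For nonzero $T$ and $0<\delta<\|T\|$, the $\delta$-approximate norm attainment set is $M_T(\delta)=\{x\in S_{\mathbb{X}}:\|Tx\|>\|T\|-\delta\}$. *)

(* Defs.v *)
From HB Require Import structures.
From mathcomp Require Import all_boot all_order all_algebra.
From mathcomp Require Import all_classical all_reals all_analysis.
Set Implicit Arguments. Unset Strict Implicit. Unset Printing Implicit Defensive.
Import Order.TTheory GRing.Theory Num.Theory.
Import numFieldNormedType.Exports.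
Local Open Scope classical_set_scope.
Local Open Scope ring_scope.

Section Defs.
Variable R : realType.

Definition bounded_op (X Y : normedModType R) (T : {linear X -> Y}) : Prop :=
  exists C : R, forall x, `|T x| <= C * `|x|.

Definition opnorm (X Y : normedModType R) (T : {linear X -> Y}) : R :=
  sup [set `|T x| | x in [set x : X | `|x| <= 1]].

Definition sphere (X : normedModType R) : set X := [set x : X | `|x| = 1].

Definition Mset (X Y : normedModType R) (T : {linear X -> Y}) : set X :=
  [set x : X | `|x| = 1 /\ `|T x| = opnorm T].

Definition Mdelta (X Y : normedModType R) (T : {linear X -> Y}) (d : R) : set X :=
  [set x : X | `|x| = 1 /\ opnorm T - d < `|T x|].

Definition dim_gt1 (X : normedModType R) : Prop :=
  exists x y : X, forall a b : R, a *: x + b *: y = 0 -> a = 0 /\ b = 0.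

Definition findim (X : normedModType R) : Prop :=
  exists (n : nat) (e : 'I_n -> X),
    forall x : X, exists c : 'I_n -> R, x = \sum_(i < n) c i *: e i.

Definition scalar_mult_isometry (X Y : normedModType R) (T : {linear X -> Y}) : Prop :=
  exists (c : R) (U : {linear X -> Y}),
    (forall x, `|U x| = `|x|) /\ (forall x, T x = c *: U x).

End Defs.

(* Main.v *)
Require Import Defs.
Set Warnings "-notation-overridden,-ambiguous-paths,-notation-incompatible-prefix,-redundant-canonical-projection,-projection-no-head-constant,-uniform-inheritance,-HB.no-new-instance".

From HB Require Import structures.
From mathcomp Require Import all_boot all_order all_algebra.
From mathcomp Require Import all_classical all_reals all_analysis.
From mathcomp Require Import ring lra.
Import Order.TTheory GRing.Theory Num.Theory.
Import numFieldNormedType.Exports.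
Local Open Scope classical_set_scope.
Local Open Scope ring_scope.
Set Implicit Arguments. Unset Strict Implicit. Unset Printing Implicit Defensive.
Section Linf.
Variable R : realType.

Definition bndseq : pred (nat -> R) :=
  fun f => `[< exists M : R, forall n, `|f n| <= M >].

Lemma bndseq_closed : GRing.subsemimod_closed bndseq.
Proof.
split; first split.
- by rewrite !inE /bndseq /=; exists 0 => n; rewrite normr0.
- move=> u v; rewrite !inE /bndseq /= => -[Mu Hu] [Mv Hv].
  exists (Mu + Mv) => n /=.
  by rewrite (le_trans (ler_normD _ _))// lerD.
- move=> a u; rewrite !inE /bndseq /= => -[Mu Hu].
  exists (`|a| * Mu) => n /=.
  by rewrite normrM ler_wpM2l.
Qed.

HB.instance Definition _ := GRing.isSubmodClosed.Build R (nat -> R) bndseq bndseq_closed.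

Record linf := Linf { lval : nat -> R; lvalP : bndseq lval }.
HB.instance Definition _ := [isSub for lval].
HB.instance Definition _ := [Choice of linf by <:].
HB.instance Definition _ := [SubChoice_isSubLmodule of linf by <:].

Lemma lval_bnd (x : linf) : exists M : R, forall n, `|lval x n| <= M.
Proof. by have /asboolP := lvalP x. Qed.

Definition lnorm (x : linf) : R := sup (range (fun n => `|lval x n|)).

Lemma lnorm_has_sup (x : linf) : has_sup (range (fun n => `|lval x n|)).
Proof.
split; first by exists `|lval x 0|, 0%N.
have [M HM] := lval_bnd x; exists M => _ [n _ <-]; exact: HM.
Qed.

Lemma lnorm_ge (x : linf) n : `|lval x n| <= lnorm x.
Proof. by apply: sup_upper_bound; [exact: lnorm_has_sup| exists n]. Qed.

Lemma lnorm_le (x : linf) (M : R) : (forall n, `|lval x n| <= M) -> lnorm x <= M.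
Proof.
move=> HM; apply: ge_sup; first by exists `|lval x 0|, 0%N.
by move=> _ [n _ <-]; exact: HM.
Qed.

Lemma lvalD (x y : linf) n : lval (x + y) n = lval x n + lval y n.
Proof. by []. Qed.
Lemma lvalZ (a : R) (x : linf) n : lval (a *: x) n = a * lval x n.
Proof. by []. Qed.
Lemma lval0 n : lval (0 : linf) n = 0.
Proof. by []. Qed.

Lemma lnormD (x y : linf) : lnorm (x + y) <= lnorm x + lnorm y.
Proof.
apply: lnorm_le => n; rewrite lvalD (le_trans (ler_normD _ _))//.
by rewrite lerD// lnorm_ge.
Qed.

Lemma lnormZ_le (a : R) (x : linf) : lnorm (a *: x) <= `|a| * lnorm x.
Proof. by apply: lnorm_le => n; rewrite lvalZ normrM ler_wpM2l// lnorm_ge. Qed.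

Lemma lnorm_ge0 (x : linf) : 0 <= lnorm x.
Proof. exact: le_trans (lnorm_ge x 0). Qed.

Lemma lnormZ (a : R) (x : linf) : lnorm (a *: x) = `|a| * lnorm x.
Proof.
apply/eqP; rewrite eq_le lnormZ_le /=.
have [->|a0] := eqVneq a 0.
  by rewrite normr0 mul0r lnorm_ge0.
have := lnormZ_le a^-1 (a *: x); rewrite scalerA mulVf// scale1r.
rewrite normrV ?unitfE// => h.
by rewrite -ler_pdivlMl ?normr_gt0// mulrC.
Qed.

Lemma lnorm0_eq0 (x : linf) : lnorm x = 0 -> x = 0.
Proof.
move=> h; apply: val_inj; apply/funext => n /=.
apply/eqP; rewrite -normr_eq0 eq_le normr_ge0 andbT -h; exact: lnorm_ge.
Qed.

HB.instance Definition _ := Lmodule_isNormed.Build R linf lnormD lnormZ lnorm0_eq0.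

Lemma linf_normE (x : linf) : `|x| = lnorm x.
Proof. by []. Qed.


Lemma lval_le_norm (x : linf) n : `|lval x n| <= `|x|.
Proof. exact: lnorm_ge. Qed.

Lemma lvalB (x y : linf) n : lval (x - y) n = lval x n - lval y n.
Proof. by []. Qed.

Lemma linf_complete (F : set_system linf) : ProperFilter F -> cauchy F -> cvg F.
Proof.
move=> PF /cauchyP Fc.
have cn : forall n, cvg ((fun y : linf => lval y n) @ F).
  move=> n; apply: cauchy_cvg; apply: cauchy_exP => e e0.
  have [x Fx] := Fc e e0; exists (lval x n).
  change (F ((fun y : linf => lval y n) @^-1` ball (lval x n) e)).
  move: Fx; apply: filterS => y; rewrite /ball /= => h.
  by rewrite -lvalB (le_lt_trans (lval_le_norm _ _)).
pose g n := lim ((fun y : linf => lval y n) @ F).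
have key : forall (x : linf) e, F (ball x e) -> forall n, `|lval x n - g n| <= e.
  move=> x e Fx n.
  have h1 : g n <= lval x n + e.
    apply: limr_le; first exact: cn.
    move: Fx; apply: filterS => y; rewrite /ball /= => h.
    have := le_lt_trans (lval_le_norm (x - y) n) h; rewrite lvalB => /ltW.
    rewrite ler_norml => /andP[+ _]; rewrite lerBrDl; lra.
  have h2 : lval x n - e <= g n.
    apply: limr_ge; first exact: cn.
    move: Fx; apply: filterS => y; rewrite /ball /= => h.
    have := le_lt_trans (lval_le_norm (x - y) n) h; rewrite lvalB => /ltW.
    rewrite ler_norml => /andP[_ +]; lra.
  rewrite ler_norml; apply/andP; split; lra.
have gb : bndseq g.
  have [x Fx] := Fc 1 ltr01.
  rewrite /bndseq; apply/asboolP; exists (`|x| + 1) => n.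
  have := key x 1 Fx n; have := lval_le_norm x n.
  have := ler_normD (lval x n) (g n - lval x n).
  rewrite addrC subrK distrC.
  move=> ha hb hc; apply: (le_trans ha); lra.
pose G : linf := Linf gb.
apply/cvg_ex; exists G.
apply/cvgrPdist_le => e e0.
have e20 : 0 < e / 2 by rewrite divr_gt0.
have [x Fx] := Fc _ e20.
have Fx' := Fx.
move: Fx'; apply: filterS => y; rewrite /ball /= => h.
rewrite linf_normE; apply: lnorm_le => n.
rewrite lvalB /=.
have := key x _ Fx n.
have := le_lt_trans (lval_le_norm (x - y) n) h; rewrite lvalB.
have := ler_normD (g n - lval x n) (lval x n - lval y n).
rewrite addrA subrK distrC => ha hb hc.
rewrite (distrC (lval x n) (g n)) in hc; apply: (le_trans ha); lra.
Qed.

HB.instance Definition _ := Uniform_isComplete.Build linf linf_complete.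

End Linf.
Section Example.
Variable R : realType.
Local Notation linf := (linf R).

Lemma Sle (t : R) n : `|t / n.+1%:R| <= `|t|.
Proof.
rewrite normrM normfV (ger0_norm (ler0n _ _)).
rewrite ler_pdivrMr ?ltr0Sn//; apply: ler_peMr => //; by rewrite ler1n.
Qed.

Lemma Sfun_bnd (x : linf) : bndseq (fun n => lval x n / n.+1%:R).
Proof.
have [M HM] := lval_bnd x.
rewrite /bndseq; apply/asboolP; exists M => n.
apply: le_trans (HM n); exact: Sle.
Qed.

Definition Sfun (x : linf) : linf := Linf (Sfun_bnd x).

Lemma Sfun_lin : linear_for *:%R Sfun.
Proof.
move=> a u v; apply: val_inj; apply/funext => n /=.
change ((a * lval u n + lval v n) / n.+1%:R = a * (lval u n / n.+1%:R) + lval v n / n.+1%:R).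
by rewrite mulrDl mulrA.
Qed.

HB.instance Definition _ := GRing.isLinear.Build R linf linf *:%R Sfun Sfun_lin.

Lemma lvalS (x : linf) n : lval (Sfun x) n = lval x n / n.+1%:R.
Proof. by []. Qed.

Lemma delta_bnd (i : nat) : bndseq (fun n => ((n == i)%:R : R)).
Proof. by rewrite /bndseq; apply/asboolP; exists 1 => n; case: eqP; rewrite ?normr1 ?normr0. Qed.

Definition delta i : linf := Linf (delta_bnd i).

Lemma norm_delta i : `|delta i| = 1.
Proof.
apply/eqP; rewrite eq_le; apply/andP; split.
  by rewrite linf_normE; apply: lnorm_le => n /=; case: eqP; rewrite ?normr1 ?normr0.
by have := lnorm_ge (delta i) i; rewrite /= eqxx normr1.
Qed.

Lemma norm_Sdelta i : `|Sfun (delta i)| <= i.+1%:R^-1.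
Proof.
rewrite linf_normE; apply: lnorm_le => n; rewrite lvalS /=.
case: eqP => [->|_]; first by rewrite mul1r ger0_norm.
by rewrite mul0r normr0.
Qed.

Lemma lval_sum n (c : 'I_n -> R) (e : 'I_n -> linf) j :
  lval (\sum_(k < n) c k *: e k) j = \sum_(k < n) c k * lval (e k) j.
Proof. by elim/big_rec2: _ => // k y z _ <-. Qed.

Lemma linf_not_findim : ~ findim linf.
Proof.
move=> [n [e He]].
have /choice [c Hc] := fun i : 'I_n.+1 => He (delta i).
pose M : 'M[R]_(n, n.+1) := \matrix_(k, j) lval (e k) j.
pose C : 'M[R]_(n.+1, n) := \matrix_(i, k) c i k.
have E : (1%:M : 'M[R]_n.+1) = C *m M.
  apply/matrixP => i j; rewrite !mxE eq_sym.
  have := congr1 (fun z : linf => lval z j) (Hc i); rewrite /= => ->.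
  rewrite lval_sum.
  apply: eq_bigr => k _; rewrite !mxE //.
have := mxrankM_maxr C M; rewrite -E mxrank1 => h.
have := leq_trans h (rank_leq_row M); by rewrite ltnn.
Qed.

Lemma example_space : exists (Z : completeNormedModType R) (S : {linear Z -> Z}),
     [/\ ~ findim Z, bounded_op S, (exists z, S z <> 0), injective S &
         forall d : R, 0 < d -> d < opnorm S -> Mdelta S d <> @sphere R Z].
Proof.
exists linf, Sfun; split.
- exact: linf_not_findim.
- exists 1 => x; rewrite mul1r linf_normE; apply: lnorm_le => n.
  rewrite lvalS (le_trans _ (lnorm_ge x n))//; exact: Sle.
- exists (delta 0) => h.
  have := congr1 (fun z : linf => lval z 0) h; rewrite /= ?lvalS /=.
  by rewrite mul1r invr1 => /eqP; rewrite oner_eq0.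
- move=> x y h; apply: val_inj; apply/funext => n.
  have := congr1 (fun z : linf => lval z n) h; rewrite /= ?lvalS.
  by move/(congr1 (fun t => t * n.+1%:R)); rewrite !divfK ?pnatr_eq0.
- move=> d d0 dS E.
  have cd : 0 < opnorm Sfun - d by rewrite subr_gt0.
  pose N := Num.truncn ((opnorm Sfun - d)^-1).
  have hN : N.+1%:R^-1 < opnorm Sfun - d.
    rewrite -[X in _ < X]invrK ltf_pV2 ?posrE ?invr_gt0 ?ltr0Sn//.
    exact: truncnS_gt.
  have : sphere (delta N) by rewrite /sphere /= norm_delta.
  rewrite -E => -[_ h].
  have := lt_le_trans h (norm_Sdelta N); move/(lt_trans hN); by rewrite ltxx.
Qed.

End Example.
Section Findim.
Variable R : realType.
Variable X : normedModType R.

Definition spans n (e : 'I_n -> X) :=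
  forall x : X, exists c : 'I_n -> R, x = \sum_(i < n) c i *: e i.

Lemma sum_split n (F : 'I_n.+1 -> X) j :
  \sum_(i < n.+1) F i = F j + \sum_(k < n) F (lift j k).
Proof. by rewrite (bigD1_ord j). Qed.

Lemma spans_reduce n (e : 'I_n.+1 -> X) (c : 'I_n.+1 -> R) j :
  spans e -> \sum_(i < n.+1) c i *: e i = 0 -> c j != 0 ->
  spans (fun k : 'I_n => e (lift j k)).
Proof.
move=> He Hc cj x.
have [a ->] := He x.
exists (fun k => a (lift j k) - a j * (c j)^-1 * c (lift j k)).
rewrite (sum_split _ j).
have ej : e j = - (c j)^-1 *: \sum_(k < n) c (lift j k) *: e (lift j k).
  move: Hc; rewrite (sum_split _ j) => /eqP; rewrite addr_eq0 => /eqP H.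
  by rewrite scaleNr -scalerN -H scalerA mulVf // scale1r.
rewrite ej scaleNr scalerN scalerA addrC.
rewrite [RHS](eq_bigr (fun k => a (lift j k) *: e (lift j k) -
   (a j * (c j)^-1) *: (c (lift j k) *: e (lift j k)))); last first.
  by move=> k _; rewrite scalerBl scalerA.
by rewrite sumrB -scaler_sumr.
Qed.

Lemma findim_basis : findim X -> exists n (e : 'I_n -> X), spans e /\
  forall c : 'I_n -> R, \sum_(i < n) c i *: e i = 0 -> forall i, c i = 0.
Proof.
move=> [n0 [e0 He0]].
pose P := fun n => `[< exists e : 'I_n -> X, spans e >].
have exP : exists n, P n by exists n0; apply/asboolP; exists e0.
case: (ex_minnP exP) => n /asboolP [e He] Hmin.
exists n, e; split => // c Hc i.
apply/eqP; apply: contraT => ci.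
destruct n as [|n]; first by have := ltn_ord i; rewrite ltn0.
have : P n by apply/asboolP; exists (fun k => e (lift i k)); exact: spans_reduce Hc ci.
by move/Hmin; rewrite ltnn.
Qed.

Lemma sum_bound (V : normedModType R) n (y : 'I_n -> V) (c : 'rV[R]_n) :
  `|\sum_(i < n) c ord0 i *: y i| <= `|c| * \sum_(i < n) `|y i|.
Proof.
rewrite (le_trans (ler_norm_sum _ _ _))// mulr_sumr ler_sum// => i _.
rewrite normrZ ler_wpM2r//.
have -> : `|c| = mx_norm c by [].
rewrite mx_normrE.
exact: (le_bigmax _ (fun ij : 'I_1 * 'I_n => `|c ij.1 ij.2|) (ord0, i)).
Qed.

End Findim.
Section Lower.
Variable R : realType.
Variables X Y : normedModType R.

Lemma findim_lower (T : {linear X -> Y}) :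
  findim X -> injective T -> exists2 m : R, 0 < m & forall x, m * `|x| <= `|T x|.
Proof.
move=> /findim_basis [n [e [He Hind]]] Tinj.
have TZ k v : T (k *: v) = k *: T v by exact: linearZ.
pose L (c : 'rV[R]_n) := \sum_(i < n) c ord0 i *: e i.
pose Ty i := T (e i).
pose TL (c : 'rV[R]_n) := \sum_(i < n) c ord0 i *: Ty i.
have TLE c : T (L c) = TL c.
  rewrite /L raddf_sum; apply: eq_bigr => i _; rewrite /Ty; exact: TZ.
have TLB c c' : TL (c - c') = TL c - TL c'.
  by rewrite /TL -sumrB; apply: eq_bigr => i _; rewrite !mxE scalerBl.
have TLZ k c : TL (k *: c) = k *: TL c.
  by rewrite /TL scaler_sumr; apply: eq_bigr => i _; rewrite !mxE scalerA.
pose K := \sum_(i < n) `|Ty i|.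
have K0 : 0 <= K by apply: sumr_ge0 => i _.
have hcont : continuous (fun c => `|TL c|).
  move=> c0; apply: (proj2 (@cvgrPdist_le _ _ _ (nbhs c0) _ (fun c => `|TL c|) `|TL c0|)) => eps eps0.
  have r0 : 0 < eps / (K + 1) by rewrite divr_gt0// ltr_wpDl.
  move: (nbhsx_ballx c0 _ r0); apply: filterS => c; rewrite -ball_normE /= => hc.
  rewrite (le_trans (ler_dist_dist _ _))// -TLB (le_trans (sum_bound _ _))//.
  rewrite (le_trans (ler_wpM2r K0 (ltW hc)))//.
  rewrite mulrAC ler_pdivrMr ?ltr_wpDl// ler_wpM2l ?(ltW eps0)//.
  by rewrite lerDl.
have hTL0 c : TL c = 0 -> c = 0.
  move=> h; have : T (L c) = T 0 by rewrite TLE h raddf0.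
  move/Tinj => Lc0.
  apply/rowP => i; rewrite mxE.
  exact: (Hind (fun i => c ord0 i) Lc0 i).
have [m0 m00 Hm0] : exists2 m0 : R, 0 < m0 & forall c, m0 * `|c| <= `|TL c|.
  have [[c1 c11]|nK] := pselect (exists c : 'rV[R]_n, `|c| = 1).
  - pose Ks := [set c : 'rV[R]_n | `|c| = 1].
    have Kne : Ks !=set0 by exists c1.
    have Kc : compact Ks.
      apply: bounded_closed_compact.
        exists 1; split => // M M1 c /= ->; exact: ltW.
      have -> : Ks = (fun c : 'rV[R]_n => `|c|) @^-1` [set 1] by [].
      apply: preimage_closed; last exact: closed_eq.
      by move=> c _; exact: norm_continuous.
    have [c0 Kc0 Hmin] := compact_EVT_min Kne Kc (continuous_subspaceT hcont).
    exists `|TL c0|.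
      rewrite normr_gt0; apply/eqP => /hTL0 c00.
      move: Kc0; rewrite inE c00 /Ks /= => h.
      have : mx_norm (0 : 'rV[R]_n) = 1 by [].
      by rewrite mx_norm0 => /eqP; rewrite eq_sym oner_eq0.
    move=> c; have [->|c0'] := eqVneq c 0; first by rewrite normr0 mulr0.
    have : `|c|^-1 *: c \in Ks.
      by rewrite inE /Ks /= normrZ normfV normr_id mulVf // normr_eq0.
    move/Hmin; rewrite TLZ normrZ normfV normr_id => h.
    have := ler_wpM2l (normr_ge0 c) h; rewrite mulrA mulfV ?normr_eq0 // mul1r mulrC.
    by [].
  - exists 1 => // c; have [->|c0'] := eqVneq c 0; first by rewrite normr0 mulr0.
    exfalso; apply: nK; exists (`|c|^-1 *: c).
    by rewrite normrZ normfV normr_id mulVf // normr_eq0.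
pose K' := \sum_(i < n) `|e i|.
have K'0 : 0 <= K' by apply: sumr_ge0 => i _.
exists (m0 / (K' + 1)); first by rewrite divr_gt0 // ltr_wpDl.
move=> x; have [a ->] := He x.
pose c : 'rV[R]_n := \row_i a i.
have xE : \sum_(i < n) a i *: e i = L c.
  by rewrite /L; apply: eq_bigr => i _; rewrite mxE.
rewrite xE TLE (le_trans _ (Hm0 c))//.
have hL := sum_bound e c; rewrite -/(L c) -/K' in hL.
apply: (le_trans (ler_wpM2l _ hL)).
  by rewrite divr_ge0 ?addr_ge0 // ltW.
rewrite mulrCA [X in _ <= X]mulrC.
rewrite ler_wpM2l ?normr_ge0 //.
rewrite -mulrA mulrC -[X in _ <= X]mul1r ler_pM2r // mulrC ler_pdivrMr ?ltr_wpDl // mul1r.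
by rewrite lerDl.
Qed.
End Lower.
Section Scal.
Variable R : realType.
Variables X Y : normedModType R.
Variable T : {linear X -> Y}.
Variable k : R.
Definition sclin (x : X) : Y := k *: T x.
Lemma sclin_lin : linear_for *:%R sclin.
Proof.
move=> a u v; rewrite /sclin.
have -> : T (a *: u + v) = a *: T u + T v by exact: linearP.
by rewrite scalerDr !scalerA mulrC.
Qed.
HB.instance Definition _ := GRing.isLinear.Build R X Y *:%R sclin sclin_lin.
End Scal.

Section Main.
Variable R : realType.
Variables X Y : normedModType R.
Variable T : {linear X -> Y}.
Hypothesis Tb : bounded_op T.

Let E := [set `|T x| | x in [set x : X | `|x| <= 1]].

Lemma opn_has_sup : has_sup E.
Proof.
split; first by exists `|T 0|, 0 => //=; rewrite normr0.
have [C HC] := Tb; exists `|C| => _ [x /= x1 <-].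
rewrite (le_trans (HC x))// (le_trans (ler_wpM2r (normr_ge0 x) (ler_norm C)))//.
by rewrite ler_piMr.
Qed.

Lemma opn_ub x : `|x| <= 1 -> `|T x| <= opnorm T.
Proof. by move=> x1; apply: sup_upper_bound; [exact: opn_has_sup| exists x]. Qed.

Lemma opn_ge0 : 0 <= opnorm T.
Proof. by rewrite (le_trans _ (@opn_ub 0 _)) ?normr0 ?raddf0 ?normr0. Qed.

Lemma TZ k v : T (k *: v) = k *: T v.
Proof. exact: linearZ. Qed.

Lemma normalize x : x != 0 ->
  `| `|x|^-1 *: x| = 1 /\ `|T (`|x|^-1 *: x)| = `|T x| / `|x|.
Proof.
move=> x0; rewrite TZ !normrZ normfV normr_id mulVf ?normr_eq0 //; split => //.
by rewrite mulrC.
Qed.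

Lemma opn_le x : `|T x| <= opnorm T * `|x|.
Proof.
have [->|x0] := eqVneq x 0; first by rewrite raddf0 !normr0 mulr0.
have [h1 h2] := normalize x0.
have := @opn_ub (`| x |^-1 *: x) ltac:(by rewrite h1); rewrite h2 ler_pdivrMr ?normr_gt0 //.
Qed.

Lemma opn_adh e : 0 < e -> exists x, `|x| <= 1 /\ opnorm T - e < `|T x|.
Proof.
move=> e0; have [_ [x x1 <-] h] := sup_adherent e0 opn_has_sup.
by exists x.
Qed.

Hypothesis Tnz : exists x, T x <> 0.

Lemma opn_gt0 : 0 < opnorm T.
Proof.
have [x Tx] := Tnz.
rewrite lt_neqAle opn_ge0 andbT; apply/eqP => h.
have := opn_le x; rewrite -h mul0r normr_le0 => /eqP; exact: Tx.
Qed.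

Lemma part1 d : 0 < d -> d < opnorm T -> Mdelta T d !=set0.
Proof.
move=> d0 dT; have [x [x1 hx]] := opn_adh d0.
have Tx0 : 0 < `|T x| by apply: le_lt_trans hx; rewrite subr_ge0 ltW.
have x0 : x != 0 by apply: contraTneq Tx0 => ->; rewrite raddf0 normr0 ltxx.
have [h1 h2] := normalize x0.
exists (`|x|^-1 *: x); split => //; rewrite h2.
apply: (lt_le_trans hx); rewrite ler_pdivlMr ?normr_gt0 //.
by rewrite ler_piMr ?normr_ge0.
Qed.

Lemma part2 d1 d2 : d1 < d2 -> Mdelta T d1 `<=` Mdelta T d2.
Proof. by move=> d12 x [x1 h]; split => //; apply: le_lt_trans h; rewrite lerB // ltW. Qed.

Lemma exists_small : ~ scalar_mult_isometry T ->
  exists x, `|x| = 1 /\ `|T x| < opnorm T.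
Proof.
move=> nS; apply: contra_notP nS => H.
have Hx : forall x, `|T x| = opnorm T * `|x|.
  move=> x; have [->|x0] := eqVneq x 0; first by rewrite raddf0 !normr0 mulr0.
  have [h1 h2] := normalize x0.
  apply/eqP; rewrite eq_le opn_le /=.
  have : ~ (`|T (`|x|^-1 *: x)| < opnorm T) by move=> h; apply: H; exists (`|x|^-1 *: x).
  move/negP; rewrite -leNgt h2 ler_pdivlMr ?normr_gt0 //.
have c0 := opn_gt0.
exists (opnorm T), (sclin T (opnorm T)^-1); split => x /=.
  by rewrite /sclin normrZ Hx normfV ger0_norm ?ltW // mulrA mulVf ?gt_eqF // mul1r.
by rewrite /sclin scalerA mulfV ?gt_eqF // scale1r.
Qed.

Lemma exists_mid : ~ scalar_mult_isometry T ->
  exists x, [/\ `|x| = 1, 0 < `|T x| & `|T x| < opnorm T].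
Proof.
move=> /exists_small [x0 [x01 hx0]].
have [Tx0|Tx0] := eqVneq (`|T x0|) 0; last first.
  by exists x0; split => //; rewrite lt_neqAle eq_sym Tx0 normr_ge0.
have c0 := opn_gt0.
have [x1 [x11 hx1]] := opn_adh (divr_gt0 c0 (ltr0Sn _ 1)).
pose y := x0 + 3^-1 *: x1.
have Ty : T y = 3^-1 *: T x1.
  rewrite /y linearD TZ; move/eqP: Tx0; rewrite normr_eq0 => /eqP ->.
  by rewrite add0r.
have Tx1 : opnorm T / 2 < `|T x1| by move: hx1; rewrite {1}(splitr (opnorm T)) addrK.
have Ty0 : 0 < `|T y|.
  have : 0 < `|T x1| by apply: lt_trans Tx1; rewrite divr_gt0.
  by rewrite Ty normrZ => h; rewrite mulr_gt0 // normr_gt0 invr_eq0 pnatr_eq0.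
have y0 : y != 0 by apply: contraTneq Ty0 => ->; rewrite raddf0 normr0 ltxx.
have [h1 h2] := normalize y0.
exists (`|y|^-1 *: y); split => //; rewrite h2.
  by rewrite divr_gt0 // normr_gt0.
have ny : 2 / 3 <= `|y|.
  have := ler_dist_dist x0 (- (3^-1 *: x1)).
  rewrite opprK -/y normrN normrZ x01 => h.
  have := le_trans (ler_norm _) h.
  have : `|3^-1| * `|x1| <= 3^-1.
    rewrite ger0_norm ?invr_ge0 ?ler0n //.
    by rewrite ler_piMr ?invr_ge0 ?ler0n.
  move=> a b; apply: le_trans _ b.
  have -> : (2 / 3 : R) = 1 - 3^-1 by field.
  by rewrite lerB.
have ny0 : 0 < `|y| by rewrite normr_gt0.
rewrite ltr_pdivrMr // Ty normrZ ger0_norm ?invr_ge0 ?ler0n //.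
have := opn_ub x11.
have := ler_wpM2l (ltW c0) ny.
move=> a b.
have h3 : (3 : R)^-1 * `|T x1| <= 3^-1 * opnorm T.
  by rewrite ler_wpM2l ?invr_ge0 ?ler0n.
apply: (le_lt_trans h3).
apply: (lt_le_trans _ a).
lra.
Qed.

End Main.
Unset Implicit Arguments.
Theorem proposition2p1 (R : realType) (X Y : completeNormedModType R)
    (T : {linear X -> Y}) :
  dim_gt1 X -> dim_gt1 Y -> bounded_op T -> (exists x, T x <> 0) ->
  (* (i) *)
  (forall d : R, 0 < d -> d < opnorm T -> Mdelta T d !=set0) /\
  (* (ii) *)
  (forall d1 d2 : R, 0 < d1 -> 0 < d2 -> d1 < opnorm T -> d2 < opnorm T ->
      d1 < d2 -> Mdelta T d1 `<=` Mdelta T d2) /\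
  (~ scalar_mult_isometry T ->
      exists d1 d2 : R, [/\ 0 < d1, d1 < d2, d2 < opnorm T &
                            Mdelta T d1 `<` Mdelta T d2]) /\
  (* (iii) *)
  Mset T = [set x : X | forall d : R, 0 < d -> d < opnorm T -> Mdelta T d x] /\
  (* (iv) *)
  (findim X ->
     (injective T <->
      exists d : R, [/\ 0 < d, d < opnorm T & Mdelta T d = @sphere R X])) /\
  (exists (Z : completeNormedModType R) (S : {linear Z -> Z}),
     [/\ ~ findim Z, bounded_op S, (exists z, S z <> 0), injective S &
         forall d : R, 0 < d -> d < opnorm S -> Mdelta S d <> @sphere R Z]).
Proof.
move=> _ _ Tb Tnz.
have c0 := opn_gt0 Tb Tnz.
split; [|split; [|split; [|split; [|split]]]].
- move=> d d0 dc; exact: part1.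
- by move=> d1 d2 _ _ _ _; exact: part2.
- move=> nS; have [x [x1 Tx0 Txc]] := exists_mid Tb Tnz nS.
  exists ((opnorm T - `|T x|) / 2), (opnorm T - `|T x| / 2); split; try lra.
  split; first by apply: part2; lra.
  move=> H; have : Mdelta T (opnorm T - `|T x| / 2) x by split => //; lra.
  by move/H => [_]; lra.
- apply/seteqP; split => x.
  + by move=> [x1 h] d d0 dc; split => //; rewrite h; lra.
  + move=> H.
    have [x1 _] : Mdelta T (opnorm T / 2) x by apply: H; lra.
    split => //.
    apply/eqP; rewrite eq_le (opn_ub Tb) ?x1 //=.
    rewrite leNgt; apply/negP => hlt.
    have [_] : Mdelta T ((opnorm T - `|T x|) / 2) x.
      apply: H; first by rewrite divr_gt0 // subr_gt0.
      have := normr_ge0 (T x); lra.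
    lra.
- move=> fx; split.
  + move=> Tinj; have [m m0 Hm] := findim_lower fx Tinj.
    have [z Tz] := Tnz.
    have z0 : z != 0 by apply/eqP => z0; apply: Tz; rewrite z0 raddf0.
    have [h1 _] := normalize T z0.
    have mc : m <= opnorm T.
      have := Hm (`|z|^-1 *: z); rewrite h1 mulr1 => h.
      apply: le_trans h _; apply: (opn_ub Tb); rewrite h1.
      by [].
    exists (opnorm T - m / 2); split; [lra|lra|].
    apply/seteqP; split => y; first by case.
    move=> y1; split => //.
    have := Hm y; rewrite y1 mulr1; lra.
  + move=> [d [d0 dc E]] x y Txy.
    apply/eqP; rewrite -subr_eq0; apply/negPn/negP => xy0.
    have [h1 h2] := normalize T xy0.
    have : sphere (`| x - y |^-1 *: (x - y)) by [].
    rewrite -E => -[_]; rewrite h2 linearB Txy subrr normr0 mul0r; lra.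
- exact: example_space.
Qed.
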